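(* Let $C=w_1-\dots-w_m$ be a chain with positive weights. If there exists an admissible decomposition of $C$ into $k$ subchains with $k>2$, then there exists an admissible decomposition of $C$ into $k-1$ subchains.
   Context: A decomposition of $C=w_1-\dots-w_m$ into $p+1$ subchains is given by integers $0=i_0<i_1<\dots<i_p<i_{p+1}=m$, with $C_j=w_{i_{j-1}+1}-\dots-w_{i_j}$. Let $\tilde\Sigma_{\rm odd}(C_j)=\sum\{w_i : i_{j-1}<i\le i_j,\ i\text{ odd}\}$ and $\tilde\Sigma_{\rm even}(C_j)=\sum\{w_i : i_{j-1}<i\le i_j,\ i\text{ even}\}$ (parity with respect to the numbering in $C$), and for $1\le j\le p$ let $\Delta_j=\tilde\Sigma_{\rm even}(C_j)\tilde\Sigma_{\rm odd}(C_{j+1})-\tilde\Sigma_{\rm even}(C_{j+1})\tilde\Sigma_{\rm odd}(C_j)$. The decomposition is admissible if every $C_j$ has at least two edges and, for every $1\le j\le p$, $\Delta_j<0$ when $i_j$ is even and $\Delta_j>0$ when $i_j$ is odd. *)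

(* Defs.v *)
From HB Require Import structures.
From mathcomp Require Import all_boot all_order all_algebra.
Set Implicit Arguments. Unset Strict Implicit. Unset Printing Implicit Defensive.
Import Order.TTheory GRing.Theory Num.Theory.
Local Open Scope ring_scope.

(* A chain C = w_1 - ... - w_m is given by m and a weight function
   w : nat -> R, of which only w 1, ..., w m are relevant.
   A decomposition into p+1 subchains is given by the list of interior
   cut points  c = [:: i_1; ...; i_p]; the full list of boundaries is
   bounds m c = [:: i_0 = 0; i_1; ...; i_p; i_{p+1} = m]. *)

Definition bounds (m : nat) (c : seq nat) : seq nat := 0%N :: rcons c m.

Definition bnd (m : nat) (c : seq nat) (j : nat) : nat := nth 0%N (bounds m c) j.

Definition is_decomposition (m : nat) (c : seq nat) : bool :=
  sorted ltn (bounds m c).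

Definition sigma_odd {R : realFieldType} (w : nat -> R) (a b : nat) : R :=
  \sum_(a.+1 <= i < b.+1 | odd i) w i.
Definition sigma_even {R : realFieldType} (w : nat -> R) (a b : nat) : R :=
  \sum_(a.+1 <= i < b.+1 | ~~ odd i) w i.

(* Delta_j for 1 <= j <= p, with C_j = (i_{j-1}, i_j], C_{j+1} = (i_j, i_{j+1}] *)
Definition Delta {R : realFieldType} (m : nat) (w : nat -> R) (c : seq nat)
    (j : nat) : R :=
  let a := bnd m c j.-1 in let b := bnd m c j in let d := bnd m c j.+1 in
  sigma_even w a b * sigma_odd w b d - sigma_even w b d * sigma_odd w a b.

(* The subchain C_j = w_{i_{j-1}+1} - ... - w_{i_j} has i_j - i_{j-1} edges
   (the weights w_i label the edges of the chain). *)
Definition admissible {R : realFieldType} (m : nat) (w : nat -> R)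
    (c : seq nat) : Prop :=
  [/\ is_decomposition m c,
      (forall j, (1 <= j <= size c + 1)%N -> (bnd m c j.-1 + 2 <= bnd m c j)%N) &
      (forall j, (1 <= j <= size c)%N ->
         if odd (bnd m c j) then 0 < Delta m w c j else Delta m w c j < 0)].

Definition num_subchains (c : seq nat) : nat := (size c).+1.

(* Main.v *)
Require Import Defs.
From HB Require Import structures.
From mathcomp Require Import all_boot all_order all_algebra.
From mathcomp Require Import ring lra zify.
Import Order.TTheory GRing.Theory Num.Theory.
Local Open Scope ring_scope.

Lemma key_real (R : realFieldType) (x y z mm : R) :
  y != z -> (y < z -> y < mm < z) -> (z < y -> z < mm < y) ->
  `|y - z| <= `|x - y| -> (x < y -> x < mm) /\ (y < x -> mm < x).
Proof.
move=> nyz h1 h2 hd.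
have [hyz|hzy] : y < z \/ z < y.
  by case: (ltgtP y z) nyz => //; [left|right].
- move: (h1 hyz) => /andP[l1 l2].
  rewrite (ltr0_norm (x := y - z)) ?subr_lt0 // in hd.
  split=> hx.
  + lra.
  + rewrite gtr0_norm ?subr_gt0 // in hd; lra.
- move: (h2 hzy) => /andP[l1 l2].
  rewrite (gtr0_norm (x := y - z)) ?subr_gt0 // in hd.
  split=> hx.
  + rewrite ltr0_norm ?subr_lt0 // in hd; lra.
  + lra.
Qed.

Lemma mediant (R : realFieldType) (e1 o1 e2 o2 : R) :
  0 < o1 -> 0 < o2 -> e1 / o1 < e2 / o2 ->
  e1 / o1 < (e1 + e2) / (o1 + o2) < e2 / o2.
Proof.
move=> p1 p2.
set x := e1 / o1; set y := e2 / o2.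
have -> : e1 = x * o1 by rewrite /x mulrVK // unitfE gt_eqF.
have -> : e2 = y * o2 by rewrite /y mulrVK // unitfE gt_eqF.
move=> hxy.
have p3 : 0 < o1 + o2 by lra.
rewrite ltr_pdivlMr // ltr_pdivrMr //.
apply/andP; split; nra.
Qed.
Section S.
Variables (R : realFieldType) (m : nat) (w : nat -> R).
Hypothesis wpos : forall i : nat, (1 <= i <= m)%N -> 0 < w i.

Lemma so_add a b c : (a <= b <= c)%N ->
  sigma_odd w a c = sigma_odd w a b + sigma_odd w b c.
Proof. by move=> /andP[h1 h2]; rewrite /sigma_odd (big_cat_nat _ (n:=b.+1)). Qed.
Lemma se_add a b c : (a <= b <= c)%N ->
  sigma_even w a c = sigma_even w a b + sigma_even w b c.
Proof. by move=> /andP[h1 h2]; rewrite /sigma_even (big_cat_nat _ (n:=b.+1)). Qed.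

Lemma sum_ge_term (P : pred nat) a b k : (a < k <= b)%N -> (b <= m)%N -> P k ->
  w k <= \sum_(a.+1 <= i < b.+1 | P i) w i.
Proof.
move=> /andP[h1 h2] hb hP.
rewrite (big_cat_nat _ (n:=k)) //= ; last by lia.
rewrite [X in _ <= _ + X]big_ltn_cond //= hP.
have g1 : 0 <= \sum_(a.+1 <= i < k | P i) w i.
  rewrite big_nat_cond; apply: sumr_ge0 => i /andP[/andP[? ?] _].
  apply/ltW/wpos; lia.
have g2 : 0 <= \sum_(k.+1 <= i < b.+1 | P i) w i.
  rewrite big_nat_cond; apply: sumr_ge0 => i /andP[/andP[? ?] _].
  apply/ltW/wpos; lia.
lra.
Qed.

Lemma so_pos a b : (a + 2 <= b)%N -> (b <= m)%N -> 0 < sigma_odd w a b.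
Proof.
move=> h hb.
case ho: (odd a.+1).
- have := @sum_ge_term odd a b a.+1; rewrite ho => /(_ _ hb isT) H.
  apply: lt_le_trans (H _); [apply: wpos|]; lia.
- have ho2 : odd a.+2 by rewrite /= -/(odd a.+1) ho.
  have := @sum_ge_term odd a b a.+2; rewrite ho2 => /(_ _ hb isT) H.
  apply: lt_le_trans (H _); [apply: wpos|]; lia.
Qed.

Definition D a b c := sigma_even w a b * sigma_odd w b c - sigma_even w b c * sigma_odd w a b.
Definition rt a b := sigma_even w a b / sigma_odd w a b.

Lemma D_rt a b c : 0 < sigma_odd w a b -> 0 < sigma_odd w b c ->
  D a b c = sigma_odd w a b * sigma_odd w b c * (rt a b - rt b c).
Proof.
move=> p1 p2; rewrite /D /rt.
by field; rewrite !gt_eqF.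
Qed.

Lemma D_pos a b c : 0 < sigma_odd w a b -> 0 < sigma_odd w b c ->
  (0 < D a b c) = (rt b c < rt a b).
Proof.
move=> p1 p2; rewrite D_rt // pmulr_rgt0 ?mulr_gt0 // subr_gt0 //.
Qed.
Lemma D_neg a b c : 0 < sigma_odd w a b -> 0 < sigma_odd w b c ->
  (D a b c < 0) = (rt a b < rt b c).
Proof.
move=> p1 p2; rewrite D_rt // pmulr_rlt0 ?mulr_gt0 // subr_lt0 //.
Qed.

Lemma rt_merge a b c : (a <= b <= c)%N -> 0 < sigma_odd w a b -> 0 < sigma_odd w b c ->
  rt a c = (sigma_even w a b + sigma_even w b c) / (sigma_odd w a b + sigma_odd w b c).
Proof. by move=> h _ _; rewrite /rt (@so_add a b c h) (@se_add a b c h). Qed.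

Lemma merge_between a b c : (a <= b <= c)%N -> 0 < sigma_odd w a b -> 0 < sigma_odd w b c ->
  (rt a b < rt b c -> rt a b < rt a c < rt b c) /\
  (rt b c < rt a b -> rt b c < rt a c < rt a b).
Proof.
move=> h p1 p2; rewrite (@rt_merge a b c h p1 p2); split=> H.
- exact: mediant.
- rewrite (addrC (sigma_even w a b)) (addrC (sigma_odd w a b)); exact: mediant.
Qed.

Lemma D_ne a b c : 0 < sigma_odd w a b -> 0 < sigma_odd w b c ->
  D a b c != 0 -> rt a b != rt b c.
Proof.
move=> p1 p2; rewrite D_rt // !mulf_eq0 negb_or => /andP[_]; rewrite subr_eq0 //.
Qed.

Lemma left_case a0 a b c : (a0 <= a <= b)%N -> (b <= c)%N ->
  0 < sigma_odd w a0 a -> 0 < sigma_odd w a b -> 0 < sigma_odd w b c ->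
  D a b c != 0 ->
  `|rt a b - rt b c| <= `|rt a0 a - rt a b| ->
  (if odd a then 0 < D a0 a b else D a0 a b < 0) ->
  (if odd a then 0 < D a0 a c else D a0 a c < 0).
Proof.
move=> /andP[h1 h2] h3 p0 p1 p2 nz hd.
have hac : (a <= b <= c)%N by rewrite h2 h3.
have pac : 0 < sigma_odd w a c by rewrite (@so_add a b c hac); lra.
have [m1 m2] := @merge_between a b c hac p1 p2.
have ne := @D_ne a b c p1 p2 nz.
have [k1 k2] := @key_real _ (rt a0 a) _ _ _ ne m1 m2 hd.
case: (odd a).
- by rewrite !D_pos //; apply: k2.
- by rewrite !D_neg //; apply: k1.
Qed.

Lemma right_case a b c d : (a <= b <= c)%N -> (c <= d)%N ->
  0 < sigma_odd w a b -> 0 < sigma_odd w b c -> 0 < sigma_odd w c d ->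
  D a b c != 0 ->
  `|rt a b - rt b c| <= `|rt c d - rt b c| ->
  (if odd c then 0 < D b c d else D b c d < 0) ->
  (if odd c then 0 < D a c d else D a c d < 0).
Proof.
move=> hac h3 p1 p2 p3 nz hd.
have pac : 0 < sigma_odd w a c by rewrite (@so_add a b c hac); lra.
have [m1 m2] := @merge_between a b c hac p1 p2.
have ne := @D_ne a b c p1 p2 nz.
rewrite eq_sym in ne.
have [k1 k2] := @key_real _ (rt c d) _ _ _ ne m2 m1 ltac:(by rewrite distrC).
case: (odd c).
- by rewrite !D_pos //; apply: k1.
- by rewrite !D_neg //; apply: k2.
Qed.
End S.

Lemma argmin (R : realFieldType) (f : nat -> R) n :
  exists j, (1 <= j <= n.+1)%N /\ forall i, (1 <= i <= n.+1)%N -> f j <= f i.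
Proof.
elim: n => [|n [j [hj H]]].
  exists 1%N; split=> // i hi; have -> : i = 1%N by lia. by [].
case: (lerP (f j) (f n.+2)) => hf.
- exists j; split; first lia.
  move=> i hi; case: (ltnP i n.+2) => hi2; first by apply: H; lia.
  by have -> : i = n.+2 by lia.
- exists n.+2; split; first lia.
  move=> i hi; case: (ltnP i n.+2) => hi2.
  + apply: le_trans (H i _); [exact: ltW | lia].
  + by have -> : i = n.+2 by lia.
Qed.

Lemma bnd_rem m c q : (q < size c)%N -> forall i,
  bnd m (take q c ++ drop q.+1 c) i = if (i <= q)%N then bnd m c i else bnd m c i.+1.
Proof.
move=> hq [|i] //=.
rewrite /bnd /bounds /= rcons_cat -drop_rcons // nth_cat size_take hq.
case: ltnP => hi.
- by rewrite nth_take // nth_rcons ifT //; lia.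
- by rewrite nth_drop; congr nth; lia.
Qed.

Theorem mainTheorem8 (R : realFieldType) (m : nat) (w : nat -> R)
    (wpos : forall i : nat, (1 <= i <= m)%N -> 0 < w i) (k : nat) :
  (2 < k)%N ->
  (exists c : seq nat, num_subchains c = k /\ admissible m w c) ->
  exists c : seq nat, num_subchains c = k.-1 /\ admissible m w c.
Proof.
move=> hk [c [hsz [_ hedge hdel]]].
rewrite /num_subchains in hsz.
set p := size c in hsz hedge hdel.
set B := bnd m c.
have Bm : B p.+1 = m by rewrite /B /bnd /bounds /= nth_rcons ltnn eqxx.
have Bmono : forall a b, (a < b <= p.+1)%N -> (B a + 2 <= B b)%N.
  move=> a; elim=> [|b IH] // /andP[hab hb].
  have := hedge b.+1; rewrite /= -/B => /(_ ltac:(lia)) hh.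
  case: (ltnP a b) => h; last by have -> : a = b by lia.
  have := IH ltac:(lia); lia.
have Bwk : forall a b, (a <= b <= p.+1)%N -> (B a <= B b)%N.
  move=> a b hab; case: (ltnP a b) => h.
  - have := Bmono a b ltac:(lia); lia.
  - by have -> : a = b by lia.
have Ble : forall i, (i <= p.+1)%N -> (B i <= m)%N.
  move=> i hi; case: (ltnP i p.+1) => h.
  - have := Bmono i p.+1 ltac:(lia); lia.
  - have -> : i = p.+1 by lia.
    by rewrite Bm.
have Opos : forall a b, (a < b <= p.+1)%N -> 0 < sigma_odd w (B a) (B b).
  move=> a b hab; apply: (@so_pos R m w wpos); [exact: Bmono | apply: Ble; lia].
have [j [hj jmin]] := @argmin R (fun i => `|@rt R w (B i.-1) (B i) - @rt R w (B i) (B i.+1)|) p.-1.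
have pe : p.-1.+1 = p by lia.
rewrite pe in hj jmin.
set q := j.-1.
have hq : (q < size c)%N by rewrite /q -/p; lia.
set c' := take q c ++ drop q.+1 c.
have HB := @bnd_rem m c q hq.
rewrite -/c' -/B in HB.
have sz' : size c' = p.-1 by rewrite size_cat size_take size_drop hq -/p; lia.
have hedge' : forall i, (1 <= i <= size c' + 1)%N -> (bnd m c' i.-1 + 2 <= bnd m c' i)%N.
  move=> i hi; rewrite !HB sz' in hi *.
  case: ifP => h1; case: ifP => h2; apply: Bmono; lia.
exists c'; split; first by rewrite /num_subchains sz'; lia.
split => //.
- apply/(sortedP 0%N) => i; rewrite /= size_rcons => hi.
  have := hedge' i.+1 ltac:(lia); rewrite /bnd /bounds /= => hh.
  case: i hi hh => [|i] /= hi hh; lia.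
- move=> i; rewrite sz' => hi.
  rewrite /Delta !HB.
  have nzj : @D R w (B q) (B q.+1) (B q.+2) != 0.
    have := hdel q.+1 ltac:(lia); rewrite /Delta -/B /=.
    by case: ifP => _ h; [rewrite gt_eqF | rewrite lt_eqF].
  case: (ltnP i.+1 q.+1) => h1.
  +
    have -> : (i.-1 <= q)%N by lia.
    have -> : (i <= q)%N by lia.
    have -> : (i.+1 <= q)%N by lia.
    by have := hdel i ltac:(lia); rewrite /Delta -/B.
  case: (ltnP q.+1 i) => h2.
  + have -> : (i.-1 <= q)%N = false by lia.
    have -> : (i <= q)%N = false by lia.
    have -> : (i.+1 <= q)%N = false by lia.
    have := hdel i.+1 ltac:(lia); rewrite /Delta -/B /=.
    by have -> : i.-1.+1 = i by lia.
  have [ei|ei] : i = q \/ i = q.+1 by lia.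
  +
    subst i.
    have -> : (q.-1 <= q)%N by lia.
    rewrite leqnn ltnn.
    have := hdel q ltac:(lia); rewrite /Delta -/B.
    apply: left_case => //.
    * by apply/andP; split; apply: Bwk; lia.
    * by apply: Bwk; lia.
    * apply: Opos; lia.
    * apply: Opos; lia.
    * apply: Opos; lia.
    * have := jmin q ltac:(lia).
      by have -> : j = q.+1 by rewrite /q; lia.
  +
    subst i.
    rewrite leqnn ltnn.
    have -> : (q.+2 <= q)%N = false by lia.
    have := hdel q.+2 ltac:(lia); rewrite /Delta -/B /=.
    apply: right_case => //.
    * by apply/andP; split; apply: Bwk; lia.
    * by apply: Bwk; lia.
    * apply: Opos; lia.
    * apply: Opos; lia.
    * apply: Opos; lia.
    * have := jmin q.+2 ltac:(lia).
      have -> : j = q.+1 by rewrite /q; lia.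
      by rewrite /= [X in _ <= X]distrC.
Qed.
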